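(* If a sequence $G_n$ of finite random directed graphs converges in the local weak sense to the random rooted directed graph $(G,o)$, then the bipartite representations $G'_n$ converge in the local weak sense to $(G',o')$, where $G'$ is the bipartite representation of $G$ and the root $o'$ is $o^-$ or $o^+$ with probability $1/2$ each. The converse does not hold: the convergence of the sequence of bipartite representations $G'_n$ does not imply the convergence of $G_n$. In fact, there are different random directed rooted graphs $(G_1,o_1)$ and $(G_2,o_2)$, each of which is the local weak limit of a sequence of finite random graphs, such that their bipartite representations $(G'_1,o'_1)$ and $(G'_2,o'_2)$ (with roots chosen as $o_i^-$ or $o_i^+$ with probability $1/2$ each) are isomorphic as random rooted graphs.
   Context: Graphs are locally finite, possibly with multiple edges and loops. The bipartite representation of a directed graph $G=(V,E)$ is the bipartite undirected graph $G'=(V^-,V^+,E')$ with $V^-=\{v^-: v\in V\}$, $V^+=\{v^+: v\in V\}$ and $E'=\{\{v^-,w^+\}: (v,w)\in E\}$. A sequence $(G_n,o)$ of locally finite random rooted (directed) graphs converges in the local weak sense to the locally finite connected random rooted (directed) graph $(G,o)$ if for every positive integer $r$ and every finite rooted (directed) graph $(H,o)$ we have $\mathbb{P}(B_{G_n}(o,r)\simeq (H,o))\to \mathbb{P}(B_{G}(o,r)\simeq (H,o))$, where $B_G(x,r)$ is the ball of radius $r$ around $x$ in the graph metric and $\simeq$ denotes rooted isomorphism. For non-rooted finite graphs $G_n$, local weak convergence means convergence of $G_n$ with a root chosen uniformly at random among its vertices. *)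

(* Defs.v *)
From HB Require Import structures.
From mathcomp Require Import all_boot all_order all_algebra.
From mathcomp Require Import all_classical all_reals all_analysis.
Set Implicit Arguments. Unset Strict Implicit. Unset Printing Implicit Defensive.
Import Order.TTheory GRing.Theory Num.Theory.
Local Open Scope classical_set_scope.
Local Open Scope ring_scope.

(* A (multi)graph with vertex set a subset of nat.  [gE v w] is the number of
   edges from v to w (loops: gE v v).  A directed graph is any well-formed
   graph; an undirected multigraph is a well-formed graph with symmetric gE
   (gE v w = gE w v = number of edges {v,w}).  Every locally finite connected
   graph is countable, so vertex set in nat is no loss of generality; all
   notions below are invariant under isomorphism. *)
Record graph := Graph { gV : set nat ; gE : nat -> nat -> nat }.

Definition wf (G : graph) : Prop :=
  forall v w, gE G v w <> 0%N -> gV G v /\ gV G w.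

Definition symmetric (G : graph) : Prop := forall v w, gE G v w = gE G w v.

Definition directed_graph (G : graph) : Prop := wf G.
Definition undirected_graph (G : graph) : Prop := wf G /\ symmetric G.

Definition locally_finite (G : graph) : Prop :=
  forall v, gV G v -> finite_set [set w | gE G v w <> 0%N \/ gE G w v <> 0%N].

Definition finite_graph (G : graph) : Prop := finite_set (gV G).

(* adjacency in the underlying undirected graph (graph metric ignores directions) *)
Definition adj (G : graph) (u v : nat) : Prop :=
  gV G u /\ gV G v /\ (0 < gE G u v + gE G v u)%N.

Fixpoint reach (G : graph) (o : nat) (n : nat) (v : nat) : Prop :=
  match n with
  | 0 => v = o /\ gV G o
  | n.+1 => reach G o n v \/ exists u, reach G o n u /\ adj G u v
  end.

Definition connected (G : graph) (o : nat) : Prop :=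
  forall v, gV G v -> exists n, reach G o n v.

Definition ballV (G : graph) (o : nat) (r : nat) : set nat := [set v | reach G o r v].

Definition isom (A : set nat) (E1 : nat -> nat -> nat)
                (B : set nat) (E2 : nat -> nat -> nat) (f : nat -> nat) : Prop :=
  [/\ (forall v, A v -> B (f v)),
      (forall v w, A v -> A w -> f v = f w -> v = w),
      (forall y, B y -> exists v, A v /\ f v = y) &
      (forall v w, A v -> A w -> E2 (f v) (f w) = E1 v w)].

Definition giso (G F : graph) : Prop :=
  exists f, isom (gV G) (gE G) (gV F) (gE F) f.

Definition ball_iso (G : graph) (o r : nat) (H : graph) (h : nat) : Prop :=
  exists f, isom (ballV G o r) (gE G) (gV H) (gE H) f /\ f o = h.

Definition finite_rooted (cls : graph -> Prop) (H : graph) (h : nat) : Prop :=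
  [/\ cls H, finite_graph H & gV H h].

(* bipartite representation: v^- = 2v, v^+ = 2v+1, edge {v^-, w^+} for each
   edge (v, w) *)
Definition vminus (v : nat) : nat := v.*2.
Definition vplus (v : nat) : nat := v.*2.+1.

Definition bip (G : graph) : graph :=
  Graph [set x | gV G x./2]
    (fun x y => if ~~ odd x && odd y then gE G x./2 y./2
                else if odd x && ~~ odd y then gE G y./2 x./2 else 0%N).

Section Random.
Variable R : realType.

Definition cnt (A : set nat) : R := (\sum_(v \in A) (1 : R))%R.

(* fraction of vertices v of the finite graph G with B_G(v,r) ~= (H,h), i.e.
   P(B_G(o,r) ~= (H,h)) for a uniformly chosen root o *)
Definition frac (G : graph) (r : nat) (H : graph) (h : nat) : R :=
  cnt [set v | gV G v /\ ball_iso G v r H h] / cnt (gV G).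

Definition random_finite_graph (cls : graph -> Prop) d (Om : measurableType d)
    (G : Om -> graph) : Prop :=
  (forall w, [/\ cls (G w), finite_graph (G w) & gV (G w) !=set0]) /\
  (forall F, cls F -> finite_graph F -> measurable [set w | giso (G w) F]).

(* A random rooted locally finite connected graph (of class cls): a map into
   rooted graphs which is measurable for the local topology, i.e. all the
   events {B_G(o,r) ~= (H,h)} (which generate its Borel sigma-algebra) are
   measurable. *)
Definition random_rooted_graph (cls : graph -> Prop) d (Om : measurableType d)
    (G : Om -> graph) (o : Om -> nat) : Prop :=
  (forall w, [/\ cls (G w), locally_finite (G w), gV (G w) (o w)
                & connected (G w) (o w)]) /\
  (forall r H h, measurable [set w | ball_iso (G w) (o w) r H h]).

Definition fprob d (Om : measurableType d) (P : probability Om R)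
    (G : Om -> graph) (r : nat) (H : graph) (h : nat) : \bar R :=
  (\int[P]_(w in setT) (frac (G w) r H h)%:E)%E.

Definition rprob d (Om : measurableType d) (P : probability Om R)
    (G : Om -> graph) (o : Om -> nat) (r : nat) (H : graph) (h : nat) : \bar R :=
  P [set w | ball_iso (G w) (o w) r H h].

Definition lwc (cls : graph -> Prop) (pn : nat -> nat -> graph -> nat -> \bar R)
    (p : nat -> graph -> nat -> \bar R) : Prop :=
  forall r H h, finite_rooted cls H h ->
    (fun n => pn n r H h) @ \oo --> p r H h.

(* ball probabilities of the bipartite representation (G', o') of (G, o),
   with o' = o^- or o^+ with probability 1/2 each (independently of G) *)
Definition bprob d (Om : measurableType d) (P : probability Om R)
    (G : Om -> graph) (o : Om -> nat) (r : nat) (H : graph) (h : nat) : \bar R :=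
  ((2^-1)%:E * (rprob P (fun w => bip (G w)) (fun w => vminus (o w)) r H h
              + rprob P (fun w => bip (G w)) (fun w => vplus (o w)) r H h))%E.

End Random.

(* Main.v *)
Require Import Defs.
From HB Require Import structures.
From mathcomp Require Import all_boot all_order all_algebra.
From mathcomp Require Import all_classical all_reals all_analysis.
From mathcomp Require Import zify ring lra.
Local Open Scope classical_set_scope.
Local Open Scope ring_scope.
Set Implicit Arguments. Unset Strict Implicit. Unset Printing Implicit Defensive.
Import Order.TTheory GRing.Theory Num.Theory.
Import numFieldNormedType.Exports.

Module M_Gr.
Local Close Scope ring_scope.

Lemma reach_V G o j x : reach G o j x -> gV G x.
Proof.
elim: j x => [|j IH] x /=; first by case=> ->.
by case=> [/IH//|[u [_ [_ [? _]]]]].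
Qed.

Lemma reach_le G o j k x : reach G o j x -> (j <= k)%N -> reach G o k x.
Proof.
move=> H; elim: k => [|k IH]; first by rewrite leqn0 => /eqP <-.
rewrite leq_eqVlt => /orP[/eqP <- //|]; rewrite ltnS => /IH ?; by left.
Qed.

Lemma reach0 G o j : gV G o -> reach G o j o.
Proof. by move=> h; apply: (@reach_le _ _ 0) => //. Qed.

Lemma isom_comp A E1 B E2 C E3 f g :
  isom A E1 B E2 f -> isom B E2 C E3 g -> isom A E1 C E3 (g \o f).
Proof.
case=> f1 f2 f3 f4 [g1 g2 g3 g4]; split => /=.
- by move=> v /f1/g1.
- by move=> v w Av Aw /(g2 _ _ (f1 _ Av) (f1 _ Aw)) /f2; apply.
- move=> y /g3 [z [Bz <-]]; have [v [Av <-]] := f3 _ Bz; by exists v.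
- by move=> v w Av Aw; rewrite g4 ?f4 //; apply: f1.
Qed.

Lemma isom_inv A E1 B E2 f : isom A E1 B E2 f ->
  exists g, isom B E2 A E1 g /\ (forall v, A v -> g (f v) = v)
            /\ (forall y, B y -> f (g y) = y).
Proof.
case=> f1 f2 f3 f4.
have : forall y, exists v, B y -> A v /\ f v = y.
  move=> y; case: (pselect (B y)) => By; last by exists 0.
  by have [v hv] := f3 _ By; exists v.
case/choice => g hg.
have gK : forall v, A v -> g (f v) = v.
  by move=> v Av; have [h1 h2] := hg (f v) (f1 _ Av); apply: f2.
exists g; split; last by split => // y /hg[].
split.
- by move=> y /hg[].
- move=> y z By Bz e; have [_ <-] := hg y By; have [_ <-] := hg z Bz; by rewrite e.
- by move=> v Av; exists (f v); split; [apply: f1| apply: gK].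
- move=> y z By Bz; have [ay <-] := hg y By; have [az <-] := hg z Bz.
  by rewrite !gK // f4.
Qed.

Section Transfer.
Variables (G1 G2 : graph) (A : set nat) (f : nat -> nat) (o r : nat).
Hypotheses (Ao : A o) (AV1 : forall a, A a -> gV G1 a)
  (AV2 : forall a, A a -> gV G2 (f a))
  (finj : forall a b, A a -> A b -> f a = f b -> a = b)
  (fE : forall a b, A a -> A b -> gE G2 (f a) (f b) = gE G1 a b)
  (hball : forall x, reach G1 o r x -> A x)
  (hsurj : forall y, reach G2 (f o) r y -> exists2 x, A x & f x = y).

Lemma adj_transfer a b : A a -> A b -> adj G1 a b <-> adj G2 (f a) (f b).
Proof.
move=> Aa Ab; rewrite /adj !fE //; split=> -[_ [_ h]]; do !split => //; by apply: AV1 || apply: AV2.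
Qed.

Lemma transfer_reach j : (j <= r)%N ->
  forall x, A x -> (reach G1 o j x <-> reach G2 (f o) j (f x)).
Proof.
elim: j => [|j IH] hj x Ax /=.
  split; first by case=> -> _; split => //; apply: AV2.
  by case=> /(finj Ax Ao) -> _; split => //; apply: AV1.
have hj' : (j <= r)%N by apply: ltnW.
split.
  case=> [/(IH hj' _ Ax) h|[u [hu hadj]]]; first by left.
  have Au : A u by apply: hball; apply: reach_le hu _.
  right; exists (f u); split; first by apply/(IH hj').
  by apply/adj_transfer.
case=> [/(IH hj' _ Ax) h|[u' [hu' hadj]]]; first by left.
have [u Au fu] := hsurj (reach_le hu' hj'); subst u'.
right; exists u; split; first by apply/(IH hj').
by apply/(adj_transfer Au Ax).
Qed.

Lemma transfer_isom :
  isom (ballV G1 o r) (gE G1) (ballV G2 (f o) r) (gE G2) f.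
Proof.
split.
- by move=> v hv; apply/(transfer_reach (leqnn r) (hball hv)).
- by move=> v w /hball Av /hball Aw; apply: finj.
- move=> y hy; have [x Ax fx] := hsurj hy; exists x; split => //.
  by apply/(transfer_reach (leqnn r) Ax); rewrite fx.
- by move=> v w /hball Av /hball Aw; apply: fE.
Qed.
End Transfer.

Lemma ball_iso_isom G1 G2 o1 o2 r f :
  gV G1 o1 ->
  isom (ballV G1 o1 r) (gE G1) (ballV G2 o2 r) (gE G2) f -> f o1 = o2 ->
  forall H h, ball_iso G1 o1 r H h <-> ball_iso G2 o2 r H h.
Proof.
move=> V1 hf fo H h; split.
  case=> g [hg go]; have [f' [hf' [f'K _]]] := isom_inv hf.
  exists (g \o f'); split; first by apply: isom_comp hf' hg.
  by rewrite /= -fo f'K //; apply: reach0.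
case=> g [hg go]; exists (g \o f); split; first by apply: isom_comp hf hg.
by rewrite /= fo.
Qed.

Definition bipmap (f : nat -> nat) (x : nat) : nat := ((f x./2).*2 + odd x)%N.

Lemma bipmap_half f x : (bipmap f x)./2 = f x./2.
Proof. by rewrite /bipmap addnC half_bit_double. Qed.

Lemma bipmap_odd f x : odd (bipmap f x) = odd x.
Proof. by rewrite /bipmap oddD odd_double oddb. Qed.

Lemma gE_bip G x y : gE (bip G) x y =
  if ~~ odd x && odd y then gE G x./2 y./2
  else if odd x && ~~ odd y then gE G y./2 x./2 else 0%N.
Proof. by []. Qed.

Lemma bip_isom A B G T f : isom A (gE G) B (gE T) f ->
  isom [set x | A x./2] (gE (bip G)) [set y | B y./2] (gE (bip T)) (bipmap f).
Proof.
case=> f1 f2 f3 f4; split => /=.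
- by move=> x Ax; rewrite bipmap_half; apply: f1.
- move=> x y Ax Ay e.
  have h : x./2 = y./2 by apply: f2 => //; rewrite -!bipmap_half e.
  have o' : odd x = odd y by rewrite -(bipmap_odd f x) e bipmap_odd.
  by rewrite -(odd_double_half x) -(odd_double_half y) h o'.
- move=> y By; have [v [Av fv]] := f3 _ By; exists (v.*2 + odd y)%N.
  have hx : (v.*2 + odd y)./2 = v by rewrite addnC half_bit_double.
  have ho : odd (v.*2 + odd y) = odd y by rewrite oddD odd_double oddb.
  rewrite /= hx; split => //.
  by rewrite /bipmap hx ho fv addnC odd_double_half.
- move=> x y Ax Ay; rewrite /= !bipmap_odd !bipmap_half.
  by case: (odd x); case: (odd y) => //=; rewrite f4.
Qed.

Lemma adj_bip G x y : adj (bip G) x y -> adj G x./2 y./2.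
Proof.
case=> hx [hy]; rewrite !gE_bip => hs; split => //; split => //.
by move: hs; case: (odd x); case: (odd y) => //=; rewrite !addn_gt0 => /orP[]->; rewrite ?orbT.
Qed.

Lemma reach_bip G o j x : reach (bip G) o j x -> reach G o./2 j x./2.
Proof.
elim: j x => [|j IH] x /=; first by case=> -> h.
case=> [/IH|[u [/IH hu /adj_bip ha]]]; first by left.
by right; exists u./2.
Qed.

Lemma bip_ball G v r T t (b : bool) : gV G v -> ball_iso G v r T t ->
  forall H h, ball_iso (bip G) (v.*2 + b)%N r H h <-> ball_iso (bip T) (t.*2 + b)%N r H h.
Proof.
move=> Vv [f [hf ft]].
have hb := bip_isom hf; case: hb => b1 b2 b3 b4.
have hv2 : (v.*2 + b)./2 = v by rewrite addnC half_bit_double.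
have fo : bipmap f (v.*2 + b)%N = (t.*2 + b)%N.
  by rewrite /bipmap hv2 ft oddD odd_double oddb.
apply: ball_iso_isom.
- by rewrite /bip /= hv2.
- rewrite -fo; apply: (transfer_isom (A := [set x | ballV G v r x./2])).
  + by rewrite /= hv2; apply: reach0.
  + by move=> a /= /reach_V.
  + by move=> a /b1.
  + exact: b2.
  + exact: b4.
  + by move=> x /reach_bip; rewrite hv2.
  + move=> y /reach_V /b3 [x [Ax fx]]; by exists x.
- exact: fo.
Qed.


Definition cgraph (m : nat) (s : seq nat) : graph :=
  Graph [set i | (i < m)%N]
    (fun i j => if (i < m)%N && (j < m)%N then nth 0%N s (i * m + j)%N else 0%N).
Definition dflt_code : (nat * seq nat) * nat := ((1%N, [:: 0%N]), 0%N).
Definition code (k : nat) : (nat * seq nat) * nat :=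
  match unpickle k with
  | Some c => if (c.2 < c.1.1)%N then c else dflt_code
  | None => dflt_code end.
Definition Tg k := cgraph (code k).1.1 (code k).1.2.
Definition tr k := (code k).2.

Lemma code_ok k : (tr k < (code k).1.1)%N.
Proof.
rewrite /tr /code; case: (unpickle k) => [c|] //.
by case: ifP.
Qed.

Lemma finite_lt m : finite_set [set i | (i < m)%N].
Proof.
apply/finite_seqP; exists (iota 0 m); apply/seteqP; split => x /=;
by rewrite mem_iota.
Qed.

Lemma Tg_rooted k : finite_rooted directed_graph (Tg k) (tr k).
Proof.
split.
- move=> v w /=; case: ifP => // /andP[a b] _; split => //.
- exact: finite_lt.
- exact: code_ok.
Qed.

Lemma code_surj (A : set nat) (E : nat -> nat -> nat) o :
  finite_set A -> A o ->
  exists k f, isom A E (gV (Tg k)) (gE (Tg k)) f /\ f o = tr k.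
Proof.
case/finite_seqP => s0 ->{A} Ao.
set s := undup s0.
have ms : forall x, (x \in s) = (x \in s0) by move=> x; rewrite mem_undup.
have us : uniq s by apply: undup_uniq.
set m := size s.
set lst := [seq E (nth 0%N s (i %/ m)) (nth 0%N s (i %% m)) | i <- iota 0 (m * m)].
set c : (nat * seq nat) * nat := ((m, lst), index o s).
have om : (index o s < m)%N by rewrite index_mem ms.
have ck : code (pickle c) = c by rewrite /code pickleK /= om.
exists (pickle c), (fun v => index v s).
rewrite /Tg /tr ck /=; split; last by [].
split => /=.
- by move=> v Av; rewrite index_mem ms.
- move=> v w Av Aw e.
  by rewrite -(nth_index 0%N (_ : v \in s)) ?ms // e nth_index // ms.
- move=> y ym; exists (nth 0%N s y); split; last by rewrite index_uniq.
  by rewrite -ms mem_nth.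
- move=> v w Av Aw.
  have vm : (index v s < m)%N by rewrite index_mem ms.
  have wm : (index w s < m)%N by rewrite index_mem ms.
  rewrite vm wm /= /lst.
  have lt : (index v s * m + index w s < m * m)%N by nia.
  rewrite (nth_map 0%N) ?size_iota // nth_iota // add0n.
  have m0 : (0 < m)%N by lia.
  rewrite divnMDl // divn_small // addn0 modnMDl modn_small //.
  by rewrite !nth_index ?ms.
Qed.

Lemma ball_sub G v r : ballV G v r `<=` gV G.
Proof. by move=> x /reach_V. Qed.

Lemma ball_finite G v r : locally_finite G -> finite_set (ballV G v r).
Proof.
move=> lf; elim: r => [|r IH].
  apply: (sub_finite_set (B := [set v])); last exact: finite_set1.
  by move=> x [->].
apply: (sub_finite_set (B := ballV G v r `|` \bigcup_(u in ballV G v r)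
    [set w | gE G u w <> 0%N \/ gE G w u <> 0%N])).
  move=> x [h|[u [hu [_ [_ h]]]]]; first by left.
  right; exists u => //=; lia.
rewrite finite_setU; split => //; apply: bigcup_finite => // u hu.
by apply: lf; apply: reach_V hu.
Qed.

Definition riso (T : graph) t (T' : graph) t' :=
  exists g, isom (gV T) (gE T) (gV T') (gE T') g /\ g t = t'.

Lemma ball_riso G v r T t T' t' : gV G v ->
  ball_iso G v r T t -> ball_iso G v r T' t' -> riso T t T' t'.
Proof.
move=> Vv [f [hf ft]] [g [hg gt]].
have [f' [hf' [f'K _]]] := isom_inv hf.
exists (g \o f'); split; first exact: isom_comp hf' hg.
by rewrite /= -ft f'K //; apply: reach0.
Qed.

Lemma ball_iso_riso G v r T t T' t' :
  ball_iso G v r T t -> riso T t T' t' -> ball_iso G v r T' t'.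
Proof.
move=> [f [hf ft]] [g [hg gt]]; exists (g \o f); split.
  exact: isom_comp hf hg.
by rewrite /= ft.
Qed.

Lemma riso_sym T t T' t' : gV T t -> riso T t T' t' -> riso T' t' T t.
Proof.
move=> Vt [g [hg gt]]; have [g' [hg' [g'K _]]] := isom_inv hg.
by exists g'; split => //; rewrite -gt g'K.
Qed.

Definition good k := forall j, (j < k)%N -> ~ riso (Tg j) (tr j) (Tg k) (tr k).

Lemma good_uniq G v r k k' : gV G v -> good k -> good k' ->
  ball_iso G v r (Tg k) (tr k) -> ball_iso G v r (Tg k') (tr k') -> k = k'.
Proof.
move=> Vv gk gk' h h'; case: (ltngtP k k') => // lt.
  by case: (gk' _ lt); apply: ball_riso h h'.
by case: (gk _ lt); apply: ball_riso h' h.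
Qed.

Lemma good_exists G v r : gV G v -> finite_set (ballV G v r) ->
  exists k, good k /\ ball_iso G v r (Tg k) (tr k).
Proof.
move=> Vv fb.
have [k0 [f [hf ft]]] := code_surj (gE G) fb (reach0 r Vv).
have : ball_iso G v r (Tg k0) (tr k0) by exists f.
elim/ltn_ind: k0 {f hf ft} => k0 IH h0.
case: (pselect (good k0)) => gk0; first by exists k0.
have [j hj] : exists j, ~ ((j < k0)%N -> ~ riso (Tg j) (tr j) (Tg k0) (tr k0)).
  by apply/existsNP => hn; apply: gk0 => j; apply: hn.
have jk : (j < k0)%N by apply: contrapT => hn; apply: hj => /hn.
have rj : riso (Tg j) (tr j) (Tg k0) (tr k0).
  by apply: contrapT => hn; apply: hj => _.
apply: (IH j jk); apply: ball_iso_riso h0 _.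
by apply: riso_sym => //; apply: code_ok.
Qed.

End M_Gr.
Import M_Gr.
Local Open Scope ring_scope.

Module M_Fr.

Section Fr.
Variable R : realType.

Definition ind (P : Prop) : R := (`[< P >] : bool)%:R.

Lemma ind_iff P Q : (P <-> Q) -> ind P = ind Q.
Proof. by move=> h; rewrite (propext h). Qed.

Lemma ind_and P Q : ind (P /\ Q) = ind P * ind Q.
Proof.
rewrite /ind; case: (pselect P) => hp; case: (pselect Q) => hq.
- by rewrite !asboolT //; rewrite mulr1.
- by rewrite (asboolF (P := (P /\ Q))) ?(asboolF (P := Q)) ?mulr0 // => -[].
- by rewrite (asboolF (P := (P /\ Q))) ?(asboolF (P := P)) ?mul0r // => -[].
- by rewrite (asboolF (P := (P /\ Q))) ?(asboolF (P := P)) ?mul0r // => -[].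
Qed.

Lemma ind_ge0 P : 0 <= ind P. Proof. by rewrite /ind ler0n. Qed.
Lemma ind_le1 P : ind P <= 1. Proof. by rewrite /ind; case: asboolP. Qed.
Lemma indT (P : Prop) : P -> ind P = 1. Proof. by move=> h; rewrite /ind asboolT. Qed.
Lemma indF (P : Prop) : ~ P -> ind P = 0. Proof. by move=> h; rewrite /ind asboolF. Qed.

Lemma cnt_seq (V Q : set nat) s : uniq s -> (forall v, V v <-> v \in s) ->
  cnt R [set v | V v /\ Q v] = \sum_(v <- s) ind (Q v).
Proof.
move=> us hs.
have -> : [set v | V v /\ Q v] = [set` [seq v <- s | `[< Q v >]]].
  apply/seteqP; split => x /=; rewrite mem_filter.
    by case=> /hs -> /asboolP ->.
  by case/andP => /asboolP h /hs.
rewrite /cnt -fsbig_seq ?filter_uniq // big_filter big_mkcond /=.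
by apply: eq_bigr => v _; rewrite /ind; case: asboolP.
Qed.

Lemma cnt_all (V : set nat) s : uniq s -> (forall v, V v <-> v \in s) ->
  cnt R V = (size s)%:R.
Proof.
move=> us hs; have -> : V = [set` s].
  by apply/seteqP; split => x /= /hs.
by rewrite /cnt -fsbig_seq // -sum1_size natr_sum.
Qed.

Lemma frac_seq G r H h s : uniq s -> (forall v, gV G v <-> v \in s) ->
  Defs.frac R G r H h = (\sum_(v <- s) ind (ball_iso G v r H h)) / (size s)%:R.
Proof.
by move=> us hs; rewrite /Defs.frac (cnt_seq _ us hs) (cnt_all us hs).
Qed.

Lemma finite_enum (V : set nat) : finite_set V ->
  exists s, uniq s /\ forall v, V v <-> v \in s.
Proof.
case/finite_seqP => s ->; exists (undup s); split; first exact: undup_uniq.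
by move=> v; rewrite mem_undup.
Qed.

Definition bseq (s : seq nat) := flatten [seq [:: v.*2; v.*2.+1]%N | v <- s].

Lemma halfS2 a : (a.*2.+1)./2 = a.
Proof. exact: (half_bit_double a true). Qed.

Lemma half_eq x a : ((x == a.*2) || (x == a.*2.+1))%N = (x./2 == a).
Proof.
apply/idP/idP.
  case/orP => /eqP ->; first by rewrite doubleK.
  by rewrite halfS2.
move/eqP <-; have e := odd_double_half x; case: (odd x) e => /= e;
  apply/orP; [right|left]; apply/eqP; lia.
Qed.

Lemma mem_bseq s x : (x \in bseq s) = (x./2 \in s).
Proof.
elim: s => //= a s IH; rewrite !inE -IH orbA half_eq.
by rewrite /bseq /=.
Qed.

Lemma bseq_uniq s : uniq s -> uniq (bseq s).
Proof.
elim: s => //= a s IH /andP[ha us].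
rewrite /bseq /= -/(bseq s) !inE !mem_bseq doubleK IH // halfS2 (negbTE ha).
by rewrite orbF /= andbT; apply/eqP; lia.
Qed.

Lemma size_bseq s : size (bseq s) = (2 * size s)%N.
Proof. elim: s => //= a s IH; rewrite /bseq /= -/(bseq s) IH; lia. Qed.

Lemma sum_bseq s (F : nat -> R) :
  \sum_(x <- bseq s) F x = \sum_(v <- s) (F v.*2 + F v.*2.+1).
Proof.
elim: s => [|a s IH]; first by rewrite !big_nil.
by rewrite /bseq /= -/(bseq s) !big_cons IH addrA.
Qed.

Lemma bseq_V G s : (forall v, gV G v <-> v \in s) ->
  forall x, gV (bip G) x <-> x \in bseq s.
Proof. by move=> hs x; rewrite mem_bseq -hs. Qed.

Lemma frac_bip G r H h s : uniq s -> (forall v, gV G v <-> v \in s) ->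
  Defs.frac R (bip G) r H h =
  (size s)%:R^-1 * (\sum_(v <- s) (ind (ball_iso (bip G) v.*2 r H h) +
                   ind (ball_iso (bip G) v.*2.+1 r H h)) / 2).
Proof.
move=> us hs; rewrite (frac_seq _ _ _ (bseq_uniq us) (bseq_V hs)).
rewrite sum_bseq size_bseq natrM invfM -mulr_suml; lra.
Qed.

Lemma finite_bip G : finite_set (gV G) -> finite_set (gV (bip G)).
Proof.
case/finite_enum => s [us hs]; apply/finite_seqP; exists (bseq s).
by apply/seteqP; split => x /= /(bseq_V hs).
Qed.

Lemma frac_giso G G' r H h : finite_set (gV G) -> giso G G' ->
  Defs.frac R G r H h = Defs.frac R G' r H h.
Proof.
move=> /finite_enum [s [us hs]] [f hf]; have [f1 f2 f3 f4] := hf.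
have us' : uniq (map f s).
  rewrite map_inj_in_uniq // => x y /hs hx /hs hy; exact: f2.
have hs' : forall y, gV G' y <-> y \in map f s.
  move=> y; split; first by case/f3 => v [/hs hv <-]; apply: map_f.
  by case/mapP => v /hs hv ->; apply: f1.
rewrite (frac_seq _ _ _ us hs) (frac_seq _ _ _ us' hs') size_map big_map.
congr (_ / _); apply: eq_big_seq => v /hs Vv; apply: ind_iff.
apply: ball_iso_isom => //.
apply: (transfer_isom (A := gV G)) => //.
- by move=> x /reach_V.
- by move=> y /reach_V /f3 [x [ax fx]]; exists x.
Qed.

Lemma giso_bip G G' : giso G G' -> giso (bip G) (bip G').
Proof. by case=> f hf; exists (bipmap f); apply: bip_isom. Qed.

Lemma frac_bip_giso G G' r H h : finite_set (gV G) -> giso G G' ->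
  Defs.frac R (bip G) r H h = Defs.frac R (bip G') r H h.
Proof. by move=> fG hg; apply: frac_giso; [apply: finite_bip | apply: giso_bip]. Qed.


Lemma frac01 G r H h : finite_set (gV G) ->
  0 <= Defs.frac R G r H h <= 1.
Proof.
case/finite_enum => s [us hs]; rewrite (frac_seq _ _ _ us hs).
have h0 : 0 <= \sum_(v <- s) ind (ball_iso G v r H h).
  by apply: sumr_ge0 => v _; apply: ind_ge0.
have h1 : \sum_(v <- s) ind (ball_iso G v r H h) <= (size s)%:R.
  by rewrite -sum1_size natr_sum; apply: ler_sum => v _; apply: ind_le1.
case: (size s) h1 => [|n] h1; first by rewrite invr0 mulr0 lexx ler01.
by rewrite divr_ge0 //= ler_pdivrMr ?ltr0Sn // mul1r.
Qed.

Lemma sum_one (P : nat -> Prop) (y : nat -> R) B K : 0 <= B ->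
  (forall k k', P k -> P k' -> k = k') -> (forall k, P k -> y k <= B) ->
  \sum_(0 <= k < K) ind (P k) * y k <= B.
Proof.
move=> B0 hu hy; elim: K => [|K IH]; first by rewrite big_geq.
rewrite big_nat_recr //=; case: (pselect (P K)) => hK.
  rewrite big_nat_cond big1 ?add0r; first by rewrite indT // mul1r hy.
  move=> k /andP[/andP[_ kK] _]; rewrite indF ?mul0r // => hk.
  by move: kK; rewrite (hu _ _ hk hK) ltnn.
by rewrite indF // mul0r addr0.
Qed.

Lemma meas_inv d (Om : measurableType d) (Gw : Om -> graph) (phi : graph -> R) :
  random_finite_graph directed_graph Gw ->
  (forall G G', finite_set (gV G) -> giso G G' -> phi G = phi G') ->
  measurable_fun setT (fun w => phi (Gw w)).
Proof.
case=> hfin hmeas hinv _ Y mY; rewrite setTI.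
have -> : (fun w => phi (Gw w)) @^-1` Y =
    \bigcup_(k in [set k | Y (phi (Tg k))]) [set w | giso (Gw w) (Tg k)].
  apply/seteqP; split => w /=.
    move=> hY; have [_ fG [z0 Vo]] := hfin w.
    have [k [f [hf _]]] := code_surj (gE (Gw w)) fG Vo.
    have gi : giso (Gw w) (Tg k) by exists f.
    by exists k => //=; rewrite -(hinv _ _ fG gi).
  by case=> k /= hY gi; have [_ fG _] := hfin w; rewrite (hinv _ _ fG gi).
apply: bigcup_measurable => k _; apply: hmeas; by case: (Tg_rooted k).
Qed.

Section Point.
Variables (r : nat) (H : graph) (h : nat).
Definition Phi0 k := ball_iso (bip (Tg k)) (tr k).*2 r H h.
Definition Phi1 k := ball_iso (bip (Tg k)) (tr k).*2.+1 r H h.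
Definition cc k := (ind (Phi0 k) + ind (Phi1 k)) / 2.
Definition uu k := ind (good k) * cc k.
Definition ww k := ind (good k) * (1 - cc k).
Definition fr G k := Defs.frac R G r (Tg k) (tr k).
Definition fb G := Defs.frac R (bip G) r H h.

Lemma bip_ball0 G v T t : gV G v -> ball_iso G v r T t ->
  (ball_iso (bip G) v.*2 r H h <-> ball_iso (bip T) t.*2 r H h).
Proof. by move=> Vv hb; have := bip_ball false Vv hb H h; rewrite !addn0. Qed.

Lemma bip_ball1 G v T t : gV G v -> ball_iso G v r T t ->
  (ball_iso (bip G) v.*2.+1 r H h <-> ball_iso (bip T) t.*2.+1 r H h).
Proof. by move=> Vv hb; have := bip_ball true Vv hb H h; rewrite !addn1. Qed.

Definition eb G v := (ind (ball_iso (bip G) v.*2 r H h) +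
                      ind (ball_iso (bip G) v.*2.+1 r H h)) / 2.

Lemma eb01 G v : 0 <= eb G v <= 1.
Proof.
rewrite /eb; have := ind_ge0 (ball_iso (bip G) v.*2 r H h);
have := ind_le1 (ball_iso (bip G) v.*2 r H h);
have := ind_ge0 (ball_iso (bip G) v.*2.+1 r H h);
have := ind_le1 (ball_iso (bip G) v.*2.+1 r H h).
move=> *; apply/andP; split; lra.
Qed.

Lemma cc_eb G v k : gV G v -> ball_iso G v r (Tg k) (tr k) -> cc k = eb G v.
Proof.
move=> Vv hb; rewrite /cc /eb (ind_iff (bip_ball0 Vv hb)) (ind_iff (bip_ball1 Vv hb)).
by [].
Qed.

Lemma pv1 G v K : gV G v ->
  \sum_(0 <= k < K) uu k * ind (ball_iso G v r (Tg k) (tr k)) <= eb G v.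
Proof.
move=> Vv.
rewrite (eq_bigr (fun k => ind (good k /\ ball_iso G v r (Tg k) (tr k)) * cc k));
  last by move=> k _; rewrite ind_and /uu; ring.
apply: sum_one; first by case/andP: (eb01 G v).
  by move=> k k' [gk hk] [gk' hk']; apply: (good_uniq Vv gk gk' hk hk').
by move=> k [_ hk]; rewrite (cc_eb Vv hk).
Qed.

Lemma pv2 G v K : gV G v ->
  \sum_(0 <= k < K) ww k * ind (ball_iso G v r (Tg k) (tr k)) <= 1 - eb G v.
Proof.
move=> Vv.
rewrite (eq_bigr (fun k => ind (good k /\ ball_iso G v r (Tg k) (tr k)) * (1 - cc k)));
  last by move=> k _; rewrite ind_and /ww; ring.
apply: sum_one; first by case/andP: (eb01 G v) => _ ?; rewrite subr_ge0.
  by move=> k k' [gk hk] [gk' hk']; apply: (good_uniq Vv gk gk' hk hk').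
by move=> k [_ hk]; rewrite (cc_eb Vv hk).
Qed.

Lemma fb_seq G s : uniq s -> (forall v, gV G v <-> v \in s) ->
  fb G = (size s)%:R^-1 * \sum_(v <- s) eb G v.
Proof. by move=> us hs; rewrite /fb (frac_bip _ _ _ us hs). Qed.

Lemma sum_fr G s (y : nat -> R) K : uniq s -> (forall v, gV G v <-> v \in s) ->
  \sum_(0 <= k < K) y k * fr G k =
  (size s)%:R^-1 * \sum_(v <- s) \sum_(0 <= k < K) y k * ind (ball_iso G v r (Tg k) (tr k)).
Proof.
move=> us hs; rewrite [in RHS]mulr_sumr.
under [in RHS]eq_bigr => v _ do rewrite mulr_sumr.
rewrite exchange_big /=; apply: eq_bigr => k _.
rewrite /fr (frac_seq _ _ _ us hs) mulr_suml mulr_sumr; apply: eq_bigr => v _.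
ring.
Qed.

Lemma pt1 G K : finite_set (gV G) -> \sum_(0 <= k < K) uu k * fr G k <= fb G.
Proof.
case/finite_enum => s [us hs]; rewrite (sum_fr _ _ us hs) (fb_seq us hs).
apply: ler_wpM2l; first by rewrite invr_ge0 ler0n.
by rewrite !big_seq; apply: ler_sum => v /hs Vv; apply: pv1.
Qed.

Lemma pt2 G K : finite_set (gV G) -> \sum_(0 <= k < K) ww k * fr G k <= 1 - fb G.
Proof.
case/finite_enum => s [us hs]; rewrite (sum_fr _ _ us hs) (fb_seq us hs).
case: s us hs => [|a s] us hs.
  by rewrite !big_nil !mulr0 subr0 ler01.
have -> : 1 - (size (a :: s))%:R^-1 * \sum_(v <- a :: s) eb G v =
   (size (a :: s))%:R^-1 * \sum_(v <- a :: s) (1 - eb G v).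
  rewrite sumrB mulrBr -sum1_size natr_sum mulVf //.
  by rewrite -natr_sum sum1_size pnatr_eq0.
apply: ler_wpM2l; first by rewrite invr_ge0 ler0n.
by rewrite !big_seq; apply: ler_sum => v /hs Vv; apply: pv2.
Qed.
End Point.
End Fr.

End M_Fr.
Import M_Fr.
Local Open Scope ring_scope.

Module M_Sc.

Lemma cvg_fsum (R : realType) (x : nat -> nat -> R) (p y : nat -> R) K :
  (forall k, (fun n => x n k) @ \oo --> p k) ->
  (fun n => \sum_(0 <= k < K) y k * x n k) @ \oo --> \sum_(0 <= k < K) y k * p k.
Proof.
move=> hx; elim: K => [|K IH].
  under eq_fun do rewrite big_geq //.
  rewrite big_geq //; exact: cvg_cst.
under eq_fun do rewrite big_nat_recr //=.
rewrite big_nat_recr //=.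
apply: cvgD => //; apply: cvgM => //; exact: cvg_cst.
Qed.

Lemma scheffe (R : realType) (a : nat -> R) (x : nat -> nat -> R) (p u w : nat -> R) (A : R) :
  (forall k, (fun n => x n k) @ \oo --> p k) ->
  (forall n K, \sum_(0 <= k < K) u k * x n k <= a n) ->
  (forall n K, \sum_(0 <= k < K) w k * x n k <= 1 - a n) ->
  (fun K => \sum_(0 <= k < K) u k * p k) @ \oo --> A ->
  (fun K => \sum_(0 <= k < K) w k * p k) @ \oo --> 1 - A ->
  a @ \oo --> A.
Proof.
move=> hx h1 h2 hu hw; apply/cvgrPdist_le => e e0.
have e4 : 0 < e / 4 by rewrite divr_gt0.
have [K [hK1 hK2]] : exists K, `|A - \sum_(0 <= k < K) u k * p k| <= e / 4 /\
    `|1 - A - \sum_(0 <= k < K) w k * p k| <= e / 4.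
  move/cvgrPdist_le: hu => /(_ _ e4) [N1 _ hN1].
  move/cvgrPdist_le: hw => /(_ _ e4) [N2 _ hN2].
  exists (maxn N1 N2); split; [apply: hN1 | apply: hN2] => /=;
    by rewrite leq_max leqnn ?orbT.
move/cvgrPdist_le: (cvg_fsum (y := u) (K := K) hx) => /(_ _ e4) [N1 _ hN1].
move/cvgrPdist_le: (cvg_fsum (y := w) (K := K) hx) => /(_ _ e4) [N2 _ hN2].
exists (maxn N1 N2) => // n /= hn.
have := hN1 n (leq_trans (leq_maxl _ _) hn).
have := hN2 n (leq_trans (leq_maxr _ _) hn).
have := h1 n K; have := h2 n K; move: hK1 hK2.
set S1 := \sum_(0 <= k < K) u k * p k.
set S2 := \sum_(0 <= k < K) w k * p k.
set T1 := \sum_(0 <= k < K) u k * x n k.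
set T2 := \sum_(0 <= k < K) w k * x n k.
rewrite !ler_norml => /andP[a1 a2] /andP[b1 b2] c1 c2 /andP[d1 d2] /andP[f1 f2].
apply/andP; split; lra.
Qed.

End M_Sc.
Import M_Sc.
Local Open Scope ring_scope.

Module M_In.

Section Int.
Variables (R : realType) (d : measure_display) (Om : measurableType d)
  (P : probability Om R) (Gw : Om -> graph).
Hypothesis hG : random_finite_graph directed_graph Gw.

Lemma Gw_fin w : finite_set (gV (Gw w)).
Proof. by case: hG => /(_ w) []. Qed.

Lemma int01 (phi : graph -> R) :
  (forall G G', finite_set (gV G) -> giso G G' -> phi G = phi G') ->
  (forall w, 0 <= phi (Gw w) <= 1) ->
  P.-integrable setT (EFin \o (fun w => phi (Gw w))).
Proof.
move=> hinv hb; apply: measurable_bounded_integrable => //.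
- apply: le_lt_trans (probability_le1 P measurableT) _; exact: ltry.
- exact: meas_inv.
- rewrite /bounded_near; near=> M => w _ /=.
  have /andP[h0 h1] := hb w; rewrite ger0_norm //; apply: le_trans h1 _.
  near: M; apply: nbhs_pinfty_ge; exact: num_real.
Unshelve. all: by end_near.
Qed.

Lemma intE (f : Om -> R) : P.-integrable setT (EFin \o f) ->
  (\int[P]_(w in setT) (f w)%:E)%E = (\int[P]_(w in setT) f w)%:E.
Proof. by move=> hi; rewrite /Rintegral fineK // integrable_fin_num. Qed.

Lemma Rint_sum (f : nat -> Om -> R) K :
  (forall k, P.-integrable setT (EFin \o f k)) ->
  \int[P]_(w in setT) (\sum_(0 <= k < K) f k w) =
  \sum_(0 <= k < K) \int[P]_(w in setT) f k w.
Proof.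
move=> hi; rewrite /Rintegral.
under eq_integral do rewrite -sumEFin.
rewrite integral_sum //.
under eq_bigr do rewrite intE //.
by rewrite sumEFin.
Qed.

Lemma mul01 (a b : R) : 0 <= a <= 1 -> 0 <= b <= 1 -> 0 <= a * b <= 1.
Proof.
case/andP => a0 a1 /andP[b0 b1]; rewrite mulr_ge0 //=.
exact: mulr_ile1.
Qed.

Lemma ind01 (Q : Prop) : 0 <= ind R Q <= 1.
Proof. by rewrite ind_ge0 ind_le1. Qed.

Variables (r : nat) (H : graph) (h : nat).

Lemma cc01 k : 0 <= cc R r H h k <= 1.
Proof.
rewrite /cc; have := ind01 (Phi0 r H h k); have := ind01 (Phi1 r H h k).
move=> /andP[? ?] /andP[? ?]; apply/andP; split; lra.
Qed.

Lemma uu01 k : 0 <= uu R r H h k <= 1.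
Proof. by apply: mul01; [apply: ind01 | apply: cc01]. Qed.

Lemma ww01 k : 0 <= ww R r H h k <= 1.
Proof.
apply: mul01; first by apply: ind01.
by have /andP[? ?] := cc01 k; apply/andP; split; lra.
Qed.

Lemma inv_fr (y : nat -> R) k G G' : finite_set (gV G) -> giso G G' ->
  y k * fr R r G k = y k * fr R r G' k.
Proof. by move=> fG hg; rewrite /fr (frac_giso _ _ _ _ fG hg). Qed.

Lemma int_fr (y : nat -> R) k : 0 <= y k <= 1 ->
  P.-integrable setT (EFin \o (fun w => y k * fr R r (Gw w) k)).
Proof.
move=> hy; apply: (int01 (phi := fun G => y k * fr R r G k)).
  by move=> G G' fG hg; apply: inv_fr.
by move=> w; apply: mul01 => //; apply: frac01; apply: Gw_fin.
Qed.

Lemma int_fb : P.-integrable setT (EFin \o (fun w => fb R r H h (Gw w))).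
Proof.
apply: (int01 (phi := fun G => fb R r H h G)).
  by move=> G G' fG hg; rewrite /fb (frac_bip_giso _ _ _ _ fG hg).
by move=> w; apply: frac01; apply: finite_bip; apply: Gw_fin.
Qed.

Lemma int_sum (y : nat -> R) K : (forall k, 0 <= y k <= 1) ->
  (forall G, finite_set (gV G) -> 0 <= \sum_(0 <= k < K) y k * fr R r G k <= 1) ->
  P.-integrable setT (EFin \o (fun w => \sum_(0 <= k < K) y k * fr R r (Gw w) k)).
Proof.
move=> hy hb; apply: (int01 (phi := fun G => \sum_(0 <= k < K) y k * fr R r G k)).
  by move=> G G' fG hg; apply: eq_bigr => k _; apply: inv_fr.
by move=> w; apply: hb; apply: Gw_fin.
Qed.

Lemma sum_ge0 (y : nat -> R) K G : (forall k, 0 <= y k <= 1) -> finite_set (gV G) ->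
  0 <= \sum_(0 <= k < K) y k * fr R r G k.
Proof.
move=> hy fG; apply: sumr_ge0 => k _; apply: mulr_ge0;
  [by move: (hy k) => /andP[] | by move: (frac01 R r (Tg k) (tr k) fG) => /andP[]].
Qed.

Lemma Rint_lin (y : nat -> R) K : (forall k, 0 <= y k <= 1) ->
  \sum_(0 <= k < K) y k * \int[P]_(w in setT) fr R r (Gw w) k =
  \int[P]_(w in setT) (\sum_(0 <= k < K) y k * fr R r (Gw w) k).
Proof.
move=> hy; rewrite Rint_sum; last by move=> k; apply: int_fr.
apply: eq_bigr => k _; rewrite RintegralZl //.
have hi1 : 0 <= (1 : R) <= 1 by rewrite ler01 lexx.
have := int_fr (y := fun _ => 1) (k := k) hi1.
by apply: eq_integrable => // w _ /=; rewrite mul1r.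
Qed.

Lemma ineq1 K :
  \sum_(0 <= k < K) uu R r H h k * \int[P]_(w in setT) fr R r (Gw w) k <=
  \int[P]_(w in setT) fb R r H h (Gw w).
Proof.
rewrite Rint_lin; last exact: uu01.
apply: le_Rintegral => //; last by move=> w _; apply: pt1; apply: Gw_fin.
  apply: int_sum; first exact: uu01.
  move=> G fG; rewrite sum_ge0 //=; last exact: uu01.
  by apply: le_trans (pt1 _ _ _ _ K fG) _; case/andP: (frac01 R r H h (finite_bip fG)).
exact: int_fb.
Qed.

Lemma ineq2 K :
  \sum_(0 <= k < K) ww R r H h k * \int[P]_(w in setT) fr R r (Gw w) k <=
  1 - \int[P]_(w in setT) fb R r H h (Gw w).
Proof.
rewrite Rint_lin; last exact: ww01.
have i1 : P.-integrable setT (EFin \o (fun w => \sum_(0 <= k < K) ww R r H h k * fr R r (Gw w) k)).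
  apply: int_sum; first exact: ww01.
  move=> G fG; rewrite sum_ge0 //=; last exact: ww01.
  apply: le_trans (pt2 _ _ _ _ K fG) _; case/andP: (frac01 R r H h (finite_bip fG)).
  by rewrite /fb => *; lra.
rewrite lerBrDr -RintegralD //; last exact: int_fb.
have -> : 1 = \int[P]_(w in setT) (1 : R).
  rewrite Rintegral_cst // mul1r; symmetry; exact: (congr1 fine (probability_setT P)).
apply: le_Rintegral => //.
- pose F1 := fun w => \sum_(0 <= k < K) ww R r H h k * fr R r (Gw w) k.
  pose F2 := fun w => fb R r H h (Gw w).
  apply: (eq_integrable _ ((EFin \o F1) \+ (EFin \o F2))%E) => //.
  by apply: integrableD => //; exact: int_fb.
- apply: (eq_integrable _ (cst 1%E)) => //; exact: finite_measure_integrable_cst.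
- by move=> w _; rewrite -lerBrDr; apply: pt2; apply: Gw_fin.
Qed.

End Int.

Section Int2.
Variables (R : realType) (d : measure_display) (Om : measurableType d)
  (P : probability Om R) (Gw : Om -> graph).
Hypothesis hG : random_finite_graph directed_graph Gw.
Variables (r : nat) (H : graph) (h : nat).

Lemma int_fr1 k : P.-integrable setT (EFin \o (fun w => fr R r (Gw w) k)).
Proof.
have hi1 : 0 <= (1 : R) <= 1 by rewrite ler01 lexx.
have := int_fr P hG r (y := fun _ => 1) (k := k) hi1.
by apply: eq_integrable => // w _ /=; rewrite mul1r.
Qed.

Lemma fprob_fr k : fprob P Gw r (Tg k) (tr k) =
  (\int[P]_(w in setT) fr R r (Gw w) k)%:E.
Proof. exact: (intE (int_fr1 k)). Qed.

Lemma fprob_fb : fprob P (fun w => bip (Gw w)) r H h =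
  (\int[P]_(w in setT) fb R r H h (Gw w))%:E.
Proof. exact: (intE (int_fb P hG r H h)). Qed.
End Int2.

End M_In.
Import M_In.
Local Open Scope ring_scope.

Module M_Lim.

Section ProbFin.
Variables (R : realType) (d : measure_display) (Om : measurableType d)
  (P : probability Om R).

Lemma probfin A : measurable A -> P A = (fine (P A))%:E.
Proof.
move=> mA; rewrite fineK // ge0_fin_numE ?measure_ge0 //.
by apply: le_lt_trans (probability_le1 P mA) _; exact: ltry.
Qed.
End ProbFin.

Section Lim.
Variables (R : realType) (d : measure_display) (Om : measurableType d)
  (P : probability Om R) (G : Om -> graph) (o : Om -> nat).
Hypothesis hG : random_rooted_graph directed_graph G o.
Variables (r : nat) (H : graph) (h : nat).

Definition E k := [set w | ball_iso (G w) (o w) r (Tg k) (tr k)].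
Definition pk k := fine (P (E k)).
Definition FQ (Q : nat -> Prop) k := [set w | Q k /\ E k w].

Lemma mE k : measurable (E k).
Proof. by case: hG => _; apply. Qed.

Lemma FQ_T (Q : nat -> Prop) k : Q k -> FQ Q k = E k.
Proof. by move=> q; apply/seteqP; split => w /=; [case|]. Qed.

Lemma FQ_F (Q : nat -> Prop) k : ~ Q k -> FQ Q k = set0.
Proof. by move=> q; apply/seteqP; split => w /=; [case|]. Qed.

Lemma mFQ Q k : measurable (FQ Q k).
Proof.
case: (pselect (Q k)) => q; first by rewrite FQ_T //; apply: mE.
by rewrite FQ_F.
Qed.

Lemma PFQ Q k : P (FQ Q k) = (ind R (Q k) * pk k)%:E.
Proof.
case: (pselect (Q k)) => q.
  by rewrite FQ_T // indT // mul1r /pk -probfin //; apply: mE.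
by rewrite FQ_F // indF // mul0r measure0.
Qed.

Lemma PFQ' (mu : set Om -> \bar R) Q k : mu = P -> mu (FQ Q k) = (ind R (Q k) * pk k)%:E.
Proof. by move=> ->; exact: PFQ. Qed.

Lemma Gw_V w : gV (G w) (o w).
Proof. by case: hG => /(_ w) []. Qed.

Lemma Gw_ball w : finite_set (ballV (G w) (o w) r).
Proof. by case: hG => /(_ w) [_ lf _ _] _; apply: ball_finite. Qed.

Lemma sa (Q : nat -> Prop) (B : set Om) : (forall k, Q k -> good k) ->
  B = \bigcup_k FQ Q k ->
  (fun K => \sum_(0 <= k < K) ind R (Q k) * pk k) @ \oo --> fine (P B).
Proof.
move=> hQ hB.
have tF : trivIset setT (FQ Q).
  move=> i j _ _ [w [[qi ei] [qj ej]]].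
  exact: (good_uniq (Gw_V w) (hQ _ qi) (hQ _ qj) ei ej).
have := @measure_sigma_additive d R Om P (FQ Q) (mFQ Q) tF.
have mB : measurable B by rewrite hB; apply: bigcup_measurable => k _; apply: mFQ.
rewrite -hB.
have pB : forall mu : set Om -> \bar R, mu = P -> mu B = (fine (P B))%:E.
  by move=> mu ->; apply: probfin.
rewrite [X in _ --> X]pB //.
under eq_fun do under eq_bigr do rewrite PFQ' //.
under eq_fun do rewrite sumEFin.
by move/fine_cvg.
Qed.

Lemma cover : setT = \bigcup_k FQ good k.
Proof.
apply/seteqP; split => w // _.
by have [k [gk hk]] := good_exists (Gw_V w) (Gw_ball w); exists k.
Qed.

Lemma Bcover0 : [set w | ball_iso (bip (G w)) (vminus (o w)) r H h] =
  \bigcup_k FQ (fun k => good k /\ Phi0 r H h k) k.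
Proof.
apply/seteqP; split => w /=.
  move=> hb; have [k [gk hk]] := good_exists (Gw_V w) (Gw_ball w).
  exists k => //; split => //; split => //.
  by apply/(bip_ball0 _ _ (Gw_V w) hk).
case=> k _ [[gk ph] hk]; exact/(bip_ball0 _ _ (Gw_V w) hk).
Qed.

Lemma Bcover1 : [set w | ball_iso (bip (G w)) (vplus (o w)) r H h] =
  \bigcup_k FQ (fun k => good k /\ Phi1 r H h k) k.
Proof.
apply/seteqP; split => w /=.
  move=> hb; have [k [gk hk]] := good_exists (Gw_V w) (Gw_ball w).
  exists k => //; split => //; split => //.
  by apply/(bip_ball1 _ _ (Gw_V w) hk).
case=> k _ [[gk ph] hk]; exact/(bip_ball1 _ _ (Gw_V w) hk).
Qed.

Lemma mB0 : measurable [set w | ball_iso (bip (G w)) (vminus (o w)) r H h].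
Proof. by rewrite Bcover0; apply: bigcup_measurable => k _; apply: mFQ. Qed.
Lemma mB1 : measurable [set w | ball_iso (bip (G w)) (vplus (o w)) r H h].
Proof. by rewrite Bcover1; apply: bigcup_measurable => k _; apply: mFQ. Qed.

Lemma bprob_fin : bprob P G o r H h = (fine (bprob P G o r H h))%:E.
Proof.
by rewrite /bprob /rprob (probfin P mB0) (probfin P mB1) -EFinD -EFinM.
Qed.

Lemma lim_u : (fun K => \sum_(0 <= k < K) uu R r H h k * pk k) @ \oo -->
  fine (bprob P G o r H h).
Proof.
have -> : (fun K => \sum_(0 <= k < K) uu R r H h k * pk k) =
  (fun K => 2^-1 * (\sum_(0 <= k < K) ind R (good k /\ Phi0 r H h k) * pk k +
                    \sum_(0 <= k < K) ind R (good k /\ Phi1 r H h k) * pk k)).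
  apply: funext => K.
  rewrite (eq_bigr (fun k => 2^-1 * (ind R (good k /\ Phi0 r H h k) * pk k) +
     2^-1 * (ind R (good k /\ Phi1 r H h k) * pk k))); last first.
    by move=> k _; rewrite /uu /cc !ind_and; ring.
  by rewrite big_split /= -!mulr_sumr mulrDr.
rewrite /bprob /rprob (probfin P mB0) (probfin P mB1) -EFinD -EFinM /=.
apply: cvgMr; apply: cvgD.
  by apply: sa; [move=> k [] | exact: Bcover0].
by apply: sa; [move=> k [] | exact: Bcover1].
Qed.

Lemma lim_w : (fun K => \sum_(0 <= k < K) ww R r H h k * pk k) @ \oo -->
  1 - fine (bprob P G o r H h).
Proof.
have -> : (fun K => \sum_(0 <= k < K) ww R r H h k * pk k) =
  (fun K => \sum_(0 <= k < K) ind R (good k) * pk k -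
            \sum_(0 <= k < K) uu R r H h k * pk k).
  apply: funext => K; rewrite -sumrB; apply: eq_bigr => k _ /=.
  by rewrite /uu /ww; ring.
apply: cvgB; last exact: lim_u.
have -> : (1 : R) = fine (P setT) by rewrite (probability_setT P).
by apply: sa => //; exact: cover.
Qed.
End Lim.

End M_Lim.
Import M_Lim.
Local Open Scope ring_scope.

Module M_Main1.

Lemma part1 (R : realType) :
  (forall (dn : nat -> measure_display) (Omn : forall n, measurableType (dn n))
          (Pn : forall n, probability (Omn n) R) (Gn : forall n, Omn n -> graph)
          (d : measure_display) (Om : measurableType d) (P : probability Om R)
          (G : Om -> graph) (o : Om -> nat),
      (forall n, random_finite_graph directed_graph (Gn n)) ->
      random_rooted_graph directed_graph G o ->
      lwc directed_graph (fun n => fprob (Pn n) (Gn n)) (rprob P G o) ->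
      lwc undirected_graph (fun n => fprob (Pn n) (fun w => bip (Gn n w)))
          (bprob P G o)).
Proof.
move=> dn Omn Pn Gn d Om P G o hGn hG hl r H h _.
set a := fun n => \int[Pn n]_(w in setT) fb R r H h (Gn n w).
set x := fun n k => \int[Pn n]_(w in setT) fr R r (Gn n w) k.
have ea : (fun n => fprob (Pn n) (fun w => bip (Gn n w)) r H h) = (fun n => (a n)%:E).
  by apply: funext => n; apply: fprob_fb.
rewrite ea (bprob_fin P hG r H h).
apply/fine_cvgP; split; first by apply: nearW.
apply: (scheffe (x := x) (p := pk P G o r) (u := uu R r H h) (w := ww R r H h)).
- move=> k; have hk := hl r (Tg k) (tr k) (Tg_rooted k).
  have e2 : (fun n => fprob (Pn n) (Gn n) r (Tg k) (tr k)) = (fun n => (x n k)%:E).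
    by apply: funext => n; apply: fprob_fr.
  rewrite e2 /rprob (probfin P (mE hG r k)) in hk.
  exact: (fine_cvg hk).
- by move=> n K; apply: ineq1.
- by move=> n K; apply: ineq2.
- exact: lim_u.
- exact: lim_w.
Qed.

End M_Main1.
Import M_Main1.
Local Open Scope ring_scope.

Module M_Conc.
Local Close Scope ring_scope.

Definition Lg : graph := Graph [set x | x \in [:: 0%N]]
  (fun i j => if (i == 0%N) && (j == 0%N) then 1%N else 0%N).
Definition Cg : graph := Graph [set x | x \in [:: 0%N; 1%N]]
  (fun i j => if ((i == 0%N) && (j == 1%N)) || ((i == 1%N) && (j == 0%N)) then 1%N else 0%N).

Lemma reach_closed G (A : set nat) o j x : A o ->
  (forall a b, A a -> adj G a b -> A b) -> reach G o j x -> A x.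
Proof.
move=> Ao hA; elim: j x => [|j IH] x /=; first by case=> ->.
by case=> [/IH//|[u [/IH hu ha]]]; apply: hA ha.
Qed.

Lemma iso_ball F F' f v r H h : isom (gV F) (gE F) (gV F') (gE F') f -> gV F v ->
  (ball_iso F v r H h <-> ball_iso F' (f v) r H h).
Proof.
move=> hf Vv; have [f1 f2 f3 f4] := hf.
apply: ball_iso_isom => //.
apply: (transfer_isom (A := gV F)) => //.
- by move=> x /reach_V.
- by move=> y /reach_V /f3 [x [ax fx]]; exists x.
Qed.

Lemma bipL_V y : gV (bip Lg) y -> (y < 2)%N.
Proof.
rewrite /= inE => /eqP e; have : (y./2 < 1)%N by rewrite e.
by rewrite ltn_half_double.
Qed.

Lemma bipC_V y : gV (bip Cg) y -> (y < 4)%N.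
Proof.
rewrite /= !inE => h; have : (y./2 < 2)%N by case/orP: h => /eqP ->.
by rewrite ltn_half_double.
Qed.

Lemma edge_ball F a b r H h : a != b -> gV F a -> gV F b ->
  (forall x y, (x == a) || (x == b) -> adj F x y -> (y == a) || (y == b)) ->
  gE F a a = 0%N -> gE F b b = 0%N -> gE F a b = 1%N -> gE F b a = 1%N ->
  (ball_iso F a r H h <-> ball_iso (bip Lg) 0 r H h) /\
  (ball_iso F b r H h <-> ball_iso (bip Lg) 1 r H h).
Proof.
move=> ab Va Vb hcl eaa ebb eab eba.
pose f x := if x == a then 0%N else 1%N.
have fa : f a = 0%N by rewrite /f eqxx.
have fb : f b = 1%N by rewrite /f eq_sym (negbTE ab).
have key : forall o, (o == a) || (o == b) ->
    isom (ballV F o r) (gE F) (ballV (bip Lg) (f o) r) (gE (bip Lg)) f.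
  move=> o ho; apply: (transfer_isom (A := [set x | (x == a) || (x == b)])) => //.
  - by move=> x /= /orP[] /eqP ->.
  - by move=> x /= /orP[] /eqP ->; rewrite ?fa ?fb.
  - move=> x y /= /orP[] /eqP -> /orP[] /eqP -> //; rewrite fa fb //.
  - by move=> x y /= /orP[] /eqP -> /orP[] /eqP ->; rewrite ?fa ?fb.
  - by move=> x; apply: reach_closed.
  - move=> y /reach_V /bipL_V; case: y => [|[|y]] // _.
      by exists a; rewrite /= ?eqxx.
    by exists b; rewrite /= ?eqxx ?orbT.
have ka := key a; rewrite fa eqxx in ka; have kb := key b; rewrite fb eqxx orbT in kb.
by split; [apply: (ball_iso_isom Va (ka isT) fa) | apply: (ball_iso_isom Vb (kb isT) fb)].
Qed.

Lemma bipL_10 r H h : ball_iso (bip Lg) 1 r H h <-> ball_iso (bip Lg) 0 r H h.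
Proof.
have cl : forall x y, (x == 1)%N || (x == 0)%N -> adj (bip Lg) x y -> (y == 1)%N || (y == 0)%N.
  move=> x y _ [_ [Vy _]]; have := bipL_V Vy.
  by case: y {Vy} => [|[|y]].
by have [e _] := @edge_ball (bip Lg) 1 0 r H h isT isT isT cl erefl erefl erefl erefl.
Qed.

Lemma bipC_03 r H h : (ball_iso (bip Cg) 0 r H h <-> ball_iso (bip Lg) 0 r H h) /\
   (ball_iso (bip Cg) 3 r H h <-> ball_iso (bip Lg) 1 r H h).
Proof.
have cl : forall x y, (x == 0)%N || (x == 3)%N -> adj (bip Cg) x y -> (y == 0)%N || (y == 3)%N.
  move=> x y /orP[] /eqP -> [_ [Vy hs]]; move: hs; have := bipC_V Vy;
  by case: y {Vy} => [|[|[|[|y]]]].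
exact: (@edge_ball (bip Cg) 0 3 r H h isT isT isT cl erefl erefl erefl erefl).
Qed.

Lemma bipC_21 r H h : (ball_iso (bip Cg) 2 r H h <-> ball_iso (bip Lg) 0 r H h) /\
   (ball_iso (bip Cg) 1 r H h <-> ball_iso (bip Lg) 1 r H h).
Proof.
have cl : forall x y, (x == 2)%N || (x == 1)%N -> adj (bip Cg) x y -> (y == 2)%N || (y == 1)%N.
  move=> x y /orP[] /eqP -> [_ [Vy hs]]; move: hs; have := bipC_V Vy;
  by case: y {Vy} => [|[|[|[|y]]]].
exact: (@edge_ball (bip Cg) 2 1 r H h isT isT isT cl erefl erefl erefl erefl).
Qed.

Definition sw (x : nat) : nat := if x == 0%N then 1%N else 0%N.

Lemma C_sw : isom (gV Cg) (gE Cg) (gV Cg) (gE Cg) sw.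
Proof.
split.
- by move=> v; rewrite /= !inE => /orP[] /eqP ->.
- by move=> v w; rewrite /= !inE => /orP[] /eqP -> /orP[] /eqP ->.
- by move=> y; rewrite /= !inE => /orP[] /eqP ->; [exists 1%N | exists 0%N].
- by move=> v w; rewrite /= !inE => /orP[] /eqP -> /orP[] /eqP ->.
Qed.

Lemma C_10 r H h : ball_iso Cg 1 r H h <-> ball_iso Cg 0 r H h.
Proof.
have V0 : gV Cg 0%N by [].
by have [a b] := iso_ball r H h C_sw V0; split.
Qed.

End M_Conc.
Import M_Conc.
Local Open Scope ring_scope.

Module M_Conc2.

Section Conc2.
Variable R : realType.

Lemma fracL r H h : Defs.frac R Lg r H h = ind R (ball_iso Lg 0 r H h).
Proof.
rewrite (@frac_seq R Lg r H h [:: 0%N]) //.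
by rewrite big_seq1 divr1.
Qed.

Lemma fracC r H h : Defs.frac R Cg r H h = ind R (ball_iso Cg 0 r H h).
Proof.
rewrite (@frac_seq R Cg r H h [:: 0%N; 1%N]) //.
rewrite big_cons big_seq1 (ind_iff _ (C_10 r H h)) /=; lra.
Qed.

Lemma bipL_s v : gV (bip Lg) v <-> v \in [:: 0%N; 1%N].
Proof.
split; first by move/bipL_V; case: v => [|[|v]].
by rewrite !inE => /orP[] /eqP ->.
Qed.

Lemma bipC_s v : gV (bip Cg) v <-> v \in [:: 0%N; 1%N; 2%N; 3%N].
Proof.
split; first by move/bipC_V; case: v => [|[|[|[|v]]]].
by rewrite !inE => /orP[/eqP ->|/orP[/eqP ->|/orP[] /eqP ->]].
Qed.

Lemma fracbL r H h : Defs.frac R (bip Lg) r H h = ind R (ball_iso (bip Lg) 0 r H h).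
Proof.
rewrite (frac_seq _ _ _ _ _ bipL_s) //.
rewrite big_cons big_seq1 (ind_iff _ (bipL_10 r H h)) /=; lra.
Qed.

Lemma fracbC r H h : Defs.frac R (bip Cg) r H h = ind R (ball_iso (bip Lg) 0 r H h).
Proof.
rewrite (frac_seq _ _ _ _ _ bipC_s) //.
have [a0 a3] := bipC_03 r H h; have [a2 a1] := bipC_21 r H h.
have b10 := bipL_10 r H h.
rewrite !big_cons big_nil (ind_iff _ a0) (ind_iff _ a2).
rewrite (ind_iff _ (iff_trans a1 b10)) (ind_iff _ (iff_trans a3 b10)) /=; lra.
Qed.

Lemma meas_const d (T : measurableType d) (Q : Prop) : measurable [set _ : T | Q].
Proof.
case: (pselect Q) => q.
  by have -> : [set _ : T | Q] = setT by apply/seteqP; split.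
by have -> : [set _ : T | Q] = set0 by apply/seteqP; split.
Qed.

Lemma rfg_const d (T : measurableType d) (F : graph) :
  directed_graph F -> finite_graph F -> gV F !=set0 ->
  random_finite_graph directed_graph (fun _ : T => F).
Proof. by move=> a b c; split => // F' _ _; apply: meas_const. Qed.

Lemma rrg_const (cls : graph -> Prop) d (T : measurableType d) (F : graph) o :
  cls F -> locally_finite F -> gV F o -> Defs.connected F o ->
  random_rooted_graph cls (fun _ : T => F) (fun _ => o).
Proof. by move=> a b c e; split => // r H h; apply: meas_const. Qed.

Lemma fprob_const d (T : measurableType d) (P : probability T R) F r H h :
  fprob P (fun _ => F) r H h = (Defs.frac R F r H h)%:E.
Proof.
rewrite /fprob.
have := integral_cst P (@measurableT _ T) (Defs.frac R F r H h)%:E.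
move=> ->.
have PT : forall mu : set T -> \bar R, mu = P -> mu setT = 1%E.
  by move=> mu ->; apply: probability_setT.
by rewrite PT // mule1.
Qed.

Lemma rprob_const d (T : measurableType d) (P : probability T R) F o r H h :
  rprob P (fun _ => F) (fun _ => o) r H h = (ind R (ball_iso F o r H h))%:E.
Proof.
rewrite /rprob; case: (pselect (ball_iso F o r H h)) => q.
  have -> : [set _ : T | ball_iso F o r H h] = setT by apply/seteqP; split.
  by rewrite probability_setT indT.
have -> : [set _ : T | ball_iso F o r H h] = set0 by apply/seteqP; split.
by rewrite measure0 indF.
Qed.
End Conc2.

End M_Conc2.
Import M_Conc2.
Local Open Scope ring_scope.

Module M_Main23.

Lemma wfL : directed_graph Lg.
Proof. by move=> v w /=; case: ifP => // /andP[/eqP -> /eqP ->]. Qed.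

Lemma wfC : directed_graph Cg.
Proof.
by move=> v w /=; case: ifP => // /orP[] /andP[/eqP -> /eqP ->].
Qed.

Lemma finL : finite_graph Lg. Proof. exact: finite_seq. Qed.
Lemma finC : finite_graph Cg. Proof. exact: finite_seq. Qed.

Lemma lf_fin F : Defs.wf F -> finite_graph F -> locally_finite F.
Proof.
move=> w f v _; apply: sub_finite_set f => x /= [] /w [].
  by [].
by [].
Qed.

Lemma wf_bip G : Defs.wf G -> Defs.wf (bip G).
Proof.
move=> w x y /=; case: (odd x); case: (odd y) => //= /w [a b]; by split.
Qed.

Lemma sym_bip G : Defs.symmetric (bip G).
Proof. by move=> x y /=; case: (odd x); case: (odd y). Qed.

Lemma connL : Defs.connected Lg 0.
Proof. by move=> v; rewrite /= inE => /eqP ->; exists 0%N. Qed.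

Lemma connC : Defs.connected Cg 0.
Proof.
move=> v; rewrite /= !inE => /orP[] /eqP ->; first by exists 0%N.
by exists 1%N; right; exists 0%N.
Qed.

Lemma connbL : Defs.connected (bip Lg) 0.
Proof.
move=> v /bipL_V; case: v => [|[|v]] // _; first by exists 0%N.
by exists 1%N; right; exists 0%N.
Qed.

Lemma frL : finite_rooted directed_graph Lg 0.
Proof. by split; [exact: wfL | exact: finL|]. Qed.

Lemma yesLL : ball_iso Lg 0 0 Lg 0.
Proof.
exists id; split => //; split => //=.
- by move=> v [->].
- move=> y; rewrite inE => /eqP ->; by exists 0%N.
Qed.

Lemma noLC : ~ ball_iso Cg 0 0 Lg 0.
Proof.
case=> f [[f1 f2 f3 f4] f0].
have B0 : ballV Cg 0 0 0%N by [].
by have := f4 _ _ B0 B0; rewrite f0.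
Qed.

Definition Pu (R : realType) : probability unit R := @dirac _ unit tt R.

Lemma part3 (R : realType) :
  (exists (d1 : measure_display) (Om1 : measurableType d1) (P1 : probability Om1 R)
          (G1 : Om1 -> graph) (o1 : Om1 -> nat)
          (d2 : measure_display) (Om2 : measurableType d2) (P2 : probability Om2 R)
          (G2 : Om2 -> graph) (o2 : Om2 -> nat),
      random_rooted_graph directed_graph G1 o1 /\
      random_rooted_graph directed_graph G2 o2 /\
      (exists (dn : nat -> measure_display) (Omn : forall n, measurableType (dn n))
              (Pn : forall n, probability (Omn n) R) (Gn : forall n, Omn n -> graph),
          (forall n, random_finite_graph directed_graph (Gn n)) /\
          lwc directed_graph (fun n => fprob (Pn n) (Gn n)) (rprob P1 G1 o1)) /\
      (exists (dn : nat -> measure_display) (Omn : forall n, measurableType (dn n))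
              (Pn : forall n, probability (Omn n) R) (Gn : forall n, Omn n -> graph),
          (forall n, random_finite_graph directed_graph (Gn n)) /\
          lwc directed_graph (fun n => fprob (Pn n) (Gn n)) (rprob P2 G2 o2)) /\
      (exists r H h, finite_rooted directed_graph H h /\
          rprob P1 G1 o1 r H h <> rprob P2 G2 o2 r H h) /\
      (forall r H h, bprob P1 G1 o1 r H h = bprob P2 G2 o2 r H h)).
Proof.
exists default_measure_display, unit, (Pu R), (fun _ => Lg), (fun _ => 0%N).
exists default_measure_display, unit, (Pu R), (fun _ => Cg), (fun _ => 0%N).
split; first by apply: rrg_const => //; [exact: wfL | apply: lf_fin; [exact: wfL | exact: finL] | exact: connL].
split; first by apply: rrg_const => //; [exact: wfC | apply: lf_fin; [exact: wfC | exact: finC] | exact: connC].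
split.
  exists (fun _ => default_measure_display), (fun _ => unit), (fun _ => Pu R), (fun _ _ => Lg).
  split; first by move=> n; apply: rfg_const; [exact: wfL | exact: finL | by exists 0%N].
  move=> r H h _; rewrite rprob_const.
  under eq_fun do rewrite fprob_const fracL.
  exact: cvg_cst.
split.
  exists (fun _ => default_measure_display), (fun _ => unit), (fun _ => Pu R), (fun _ _ => Cg).
  split; first by move=> n; apply: rfg_const; [exact: wfC | exact: finC | by exists 0%N].
  move=> r H h _; rewrite rprob_const.
  under eq_fun do rewrite fprob_const fracC.
  exact: cvg_cst.
split.
  exists 0%N, Lg, 0%N; split; first exact: frL.
  rewrite !rprob_const (indT _ yesLL) (indF _ noLC).
  by case=> /eqP; rewrite oner_eq0.
move=> r H h; rewrite /bprob !rprob_const.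
have [a0 a3] := bipC_03 r H h; have [a2 a1] := bipC_21 r H h.
rewrite /vminus /vplus /=.
by rewrite (ind_iff _ a0) (ind_iff _ a1).
Qed.

Lemma part2 (R : realType) :
  (exists (dn : nat -> measure_display) (Omn : forall n, measurableType (dn n))
          (Pn : forall n, probability (Omn n) R) (Gn : forall n, Omn n -> graph),
      (forall n, random_finite_graph directed_graph (Gn n)) /\
      (exists (d : measure_display) (Om : measurableType d) (P : probability Om R)
              (G' : Om -> graph) (o' : Om -> nat),
          random_rooted_graph undirected_graph G' o' /\
          lwc undirected_graph (fun n => fprob (Pn n) (fun w => bip (Gn n w)))
              (rprob P G' o')) /\
      ~ (exists (d : measure_display) (Om : measurableType d) (P : probability Om R)
                (G : Om -> graph) (o : Om -> nat),
            random_rooted_graph directed_graph G o /\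
            lwc directed_graph (fun n => fprob (Pn n) (Gn n)) (rprob P G o))).
Proof.
exists (fun _ => default_measure_display), (fun _ => unit), (fun _ => Pu R),
  (fun n (_ : unit) => if odd n then Cg else Lg).
split.
  move=> n; apply: rfg_const; case: (odd n);
    by [exact: wfC | exact: wfL | exact: finC | exact: finL | exists 0%N].
split.
  exists default_measure_display, unit, (Pu R), (fun _ => bip Lg), (fun _ => 0%N).
  split.
    apply: rrg_const => //; last exact: connbL.
      by split; [apply: wf_bip; exact: wfL | exact: sym_bip].
    apply: lf_fin; [apply: wf_bip; exact: wfL | apply: finite_bip; exact: finL].
  move=> r H h _; rewrite rprob_const.
  have e : forall n, Defs.frac R (bip (if odd n then Cg else Lg)) r H h =
      ind R (ball_iso (bip Lg) 0 r H h).
    by move=> n; case: (odd n); [exact: fracbC | exact: fracbL].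
  under eq_fun do rewrite fprob_const e.
  exact: cvg_cst.
case=> d [Om [P [G [rt [hG hl]]]]].
have := hl 0%N Lg 0%N frL.
under eq_fun do rewrite fprob_const.
have e : forall n, Defs.frac R (if odd n then Cg else Lg) 0 Lg 0 =
    (if odd n then 0 else 1).
  move=> n; case: (odd n); first by rewrite fracC indF //; exact: noLC.
  by rewrite fracL indT //; exact: yesLL.
under eq_fun do rewrite e.
have m : measurable [set w | ball_iso (G w) (rt w) 0 Lg 0] by case: hG => _; apply.
rewrite /rprob (probfin P m) => /fine_cvg /= hcv.
have q0 : (0 : R) < 1 / 4 by lra.
move/cvgrPdist_le: hcv => /(_ _ q0) [N _ hN].
have h1 := hN N.*2 (_ : (N <= N.*2)%N); have h2 := hN N.*2.+1 (_ : (N <= N.*2.+1)%N).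
move: h1 h2; rewrite /= odd_double /= => h1 h2.
have hN2 : (N <= N.*2)%N by rewrite -addnn leq_addr.
move: (h1 hN2) (h2 (leq_trans hN2 (leqnSn _))).
set l := fine _; rewrite subr0 !ler_norml => /andP[a1 a2] /andP[b1 b2]; lra.
Qed.

End M_Main23.
Import M_Main23.
Local Open Scope ring_scope.

Theorem proposition1p1 (R : realType) :
  (* (1) local weak convergence of G_n implies that of the bipartite
         representations, to (G', o') with o' = o^- or o^+ w.p. 1/2 each *)
  (forall (dn : nat -> measure_display) (Omn : forall n, measurableType (dn n))
          (Pn : forall n, probability (Omn n) R) (Gn : forall n, Omn n -> graph)
          (d : measure_display) (Om : measurableType d) (P : probability Om R)
          (G : Om -> graph) (o : Om -> nat),
      (forall n, random_finite_graph directed_graph (Gn n)) ->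
      random_rooted_graph directed_graph G o ->
      lwc directed_graph (fun n => fprob (Pn n) (Gn n)) (rprob P G o) ->
      lwc undirected_graph (fun n => fprob (Pn n) (fun w => bip (Gn n w)))
          (bprob P G o)) /\
  (* (2) the converse does not hold *)
  (exists (dn : nat -> measure_display) (Omn : forall n, measurableType (dn n))
          (Pn : forall n, probability (Omn n) R) (Gn : forall n, Omn n -> graph),
      (forall n, random_finite_graph directed_graph (Gn n)) /\
      (exists (d : measure_display) (Om : measurableType d) (P : probability Om R)
              (G' : Om -> graph) (o' : Om -> nat),
          random_rooted_graph undirected_graph G' o' /\
          lwc undirected_graph (fun n => fprob (Pn n) (fun w => bip (Gn n w)))
              (rprob P G' o')) /\
      ~ (exists (d : measure_display) (Om : measurableType d) (P : probability Om R)
                (G : Om -> graph) (o : Om -> nat),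
            random_rooted_graph directed_graph G o /\
            lwc directed_graph (fun n => fprob (Pn n) (Gn n)) (rprob P G o))) /\
  (* (3) two different local weak limits with isomorphic bipartite representations *)
  (exists (d1 : measure_display) (Om1 : measurableType d1) (P1 : probability Om1 R)
          (G1 : Om1 -> graph) (o1 : Om1 -> nat)
          (d2 : measure_display) (Om2 : measurableType d2) (P2 : probability Om2 R)
          (G2 : Om2 -> graph) (o2 : Om2 -> nat),
      random_rooted_graph directed_graph G1 o1 /\
      random_rooted_graph directed_graph G2 o2 /\
      (exists (dn : nat -> measure_display) (Omn : forall n, measurableType (dn n))
              (Pn : forall n, probability (Omn n) R) (Gn : forall n, Omn n -> graph),
          (forall n, random_finite_graph directed_graph (Gn n)) /\
          lwc directed_graph (fun n => fprob (Pn n) (Gn n)) (rprob P1 G1 o1)) /\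
      (exists (dn : nat -> measure_display) (Omn : forall n, measurableType (dn n))
              (Pn : forall n, probability (Omn n) R) (Gn : forall n, Omn n -> graph),
          (forall n, random_finite_graph directed_graph (Gn n)) /\
          lwc directed_graph (fun n => fprob (Pn n) (Gn n)) (rprob P2 G2 o2)) /\
      (exists r H h, finite_rooted directed_graph H h /\
          rprob P1 G1 o1 r H h <> rprob P2 G2 o2 r H h) /\
      (forall r H h, bprob P1 G1 o1 r H h = bprob P2 G2 o2 r H h)).
Proof.
split; first exact: part1.
split; first exact: part2.
exact: part3.
Qed.
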